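(* Let $p$ be an odd prime, let $x, y \in \mathbb{Z}$ satisfy $x^2 - 2 = y^p$ with $y \neq -1$, and let $a, b \in \mathbb{Z}$ satisfy $x + \sqrt{2} = (1+\sqrt{2})(a+b\sqrt{2})^p$. Then: (1) $v_p(a-1) = v_p(b)$; (2) if $p \mid b$ then $v_p(x-1) = v_p(b) + 1$, and otherwise $p \nmid (x-1)$; in particular either $p \nmid (x-1)$ or $p^2 \mid (x-1)$; (3) if $p \mid a$ then $v_p(x-2) = v_p(a) + 1$, and otherwise $p \nmid (x-2)$; in particular either $p \nmid (x-2)$ or $p^2 \mid (x-2)$.
   Context: $v_p$ denotes the $p$-adic valuation. *)

(* Defs.v *)
From HB Require Import structures.
From mathcomp Require Import all_boot all_order all_algebra.
Set Implicit Arguments. Unset Strict Implicit. Unset Printing Implicit Defensive.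
Import Order.TTheory GRing.Theory Num.Theory.

(* p-adic valuation of an integer, with v_p(0) = +oo encoded as None. *)
Definition vp (p : nat) (z : int) : option nat :=
  if z == 0 then None else Some (logn p `|z|%N).

(* Main.v *)
Require Import Defs.
From mathcomp Require Import all_boot all_order all_algebra.
From mathcomp Require Import zify ring lra.
Import Order.TTheory GRing.Theory Num.Theory.
Local Open Scope ring_scope.

Definition Aof (p : nat) (a b : int) : int :=
  \sum_(i < p.+1 | ~~ odd i) ('C(p, i)%:Z * a ^+ (p - i) * b ^+ i * 2 ^+ i./2).
Definition Bof (p : nat) (a b : int) : int :=
  \sum_(i < p.+1 | odd i) ('C(p, i)%:Z * a ^+ (p - i) * b ^+ i * 2 ^+ i./2).

Section Aux.
Variable p : nat.
Hypothesis pr : prime p.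
Local Notation P := (p%:Z).

Lemma P_neq0 : P != 0. Proof. by have := prime_gt0 pr; case: (p). Qed.

Lemma pdvdM (u w : int) : (P %| u * w)%Z = (P %| u)%Z || (P %| w)%Z.
Proof. by rewrite !dvdzE abszM Euclid_dvdM. Qed.

Lemma pdvdX (u : int) k : (P %| u ^+ k.+1)%Z = (P %| u)%Z.
Proof. by rewrite !dvdzE abszX Euclid_dvdX // andbT. Qed.

Lemma key_dvd (z : int) n : z != 0 -> (P ^+ n %| z)%Z = (n <= logn p `|z|)%N.
Proof.
move=> z0; rewrite dvdzE abszX absz_nat pfactor_dvdn //.
by rewrite absz_gt0.
Qed.

Lemma vp_eqP (u w : int) :
  (forall n, (P ^+ n %| u)%Z = (P ^+ n %| w)%Z) -> vp p u = vp p w.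
Proof.
move=> H; rewrite /vp.
have zer : forall u w : int, (forall n, (P ^+ n %| u)%Z = (P ^+ n %| w)%Z) ->
   u == 0 -> w == 0.
  move=> u' w' H' /eqP u0; apply/negPn/negP => w0.
  have := H' (logn p `|w'|).+1; rewrite u0 dvdz0 key_dvd // ltnn. done.
case: (boolP (u == 0)) => u0.
  by rewrite (zer u w H u0).
case: (boolP (w == 0)) => w0.
  by rewrite (zer w u (fun n => esym (H n)) w0) in u0.
congr Some; apply/anti_leq/andP; split.
  by rewrite -key_dvd // -H key_dvd.
by rewrite -key_dvd // H key_dvd.
Qed.

Lemma vp_SP (u w : int) :
  (forall n, (P ^+ n.+1 %| u)%Z = (P ^+ n %| w)%Z) -> vp p u = omap S (vp p w).
Proof.
move=> H; rewrite /vp.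
case: (boolP (u == 0)) => u0.
  case: (boolP (w == 0)) => w0 //.
  have := H (logn p `|w|).+1; rewrite (eqP u0) dvdz0 key_dvd // ltnn. done.
case: (boolP (w == 0)) => w0.
  have := H (logn p `|u|); rewrite (eqP w0) dvdz0 key_dvd // ltnn. done.
congr Some.
have h1 := H (logn p `|w|); rewrite !key_dvd // leqnn in h1.
have h2 := H (logn p `|u|).-1; rewrite !key_dvd // in h2.
move: h1 h2; set lu := logn p `|u|; set lw := logn p `|w|.
case: lu => [|l] /= h1 h2; lia.
Qed.

Lemma coprimeP (e : int) n : ~~ (P %| e)%Z -> coprimez (P ^+ n) e.
Proof.
move=> he; apply: coprimezXl; rewrite coprimezE absz_nat prime_coprime //.
Qed.

Lemma cancelP (e w : int) n : ~~ (P %| e)%Z ->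
  (P ^+ n.+1 %| P * e * w)%Z = (P ^+ n %| w)%Z.
Proof.
move=> he; rewrite exprS -mulrA dvdz_mul2l ?P_neq0 //.
by rewrite Gauss_dvdzr // coprimeP.
Qed.

Lemma dvd_pow_mul (c : int) n k m : (P ^+ n %| c)%Z -> (m <= n * k)%N ->
  (P ^+ m %| c ^+ k)%Z.
Proof.
move=> hc hm; apply: dvdz_trans (dvdz_exp2l P hm) _.
by rewrite exprM; apply: dvdz_exp2r.
Qed.

End Aux.

Section Exp.
Variable p : nat.
Hypothesis pr : prime p.
Hypothesis op : odd p.
Local Notation P := (p%:Z).

Lemma p_ge3 : (3 <= p)%N.
Proof.
have := prime_gt1 pr; case: p op pr => [|[|[|q]]] //.
Qed.

Lemma dvd_bin i : (0 < i < p)%N -> (P %| 'C(p, i)%:Z)%Z.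
Proof. by move=> h; rewrite dvdzE absz_nat prime_dvd_bin. Qed.

Lemma dvd_pow (u : int) m k : (m <= k)%N -> (u ^+ m %| u ^+ k)%Z.
Proof. exact: dvdz_exp2l. Qed.

Lemma DA1 a b : (P * b ^+ 2 %| Aof p a b - a ^+ p)%Z.
Proof.
rewrite /Aof (bigD1 ord0) //= bin0 subn0 !expr0 !mulr1 mul1r addrC addrK.
apply: rpred_sum => i /andP [hi ne0].
have i0 : (0 < i)%N by rewrite lt0n.
have ip : (i < p)%N.
  have := ltn_ord i; rewrite ltnS leq_eqVlt => /orP [/eqP ei|//].
  by rewrite ei op in hi.
have i2 : (2 <= i)%N.
  case: (nat_of_ord i) i0 hi => [|[|j]] //.
have -> : 'C(p, i)%:Z * a ^+ (p - i) * b ^+ i * 2 ^+ i./2 =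
   ('C(p, i)%:Z * b ^+ i) * (a ^+ (p - i) * 2 ^+ i./2) by ring.
apply: dvdz_mulr; apply: dvdz_mul; first by apply: dvd_bin; rewrite i0 ip.
exact: dvd_pow.
Qed.

Lemma DB1 a b : (P %| Bof p a b - 2 ^+ p./2 * b ^+ p)%Z.
Proof.
rewrite /Bof (bigD1 ord_max) //= binn subnn expr0 mulr1 mul1r.
have -> : b ^+ p * 2 ^+ p./2 = 2 ^+ p./2 * b ^+ p by rewrite mulrC.
rewrite addrC addrK.
apply: rpred_sum => i /andP [hi ne].
have i0 : (0 < i)%N by case: (nat_of_ord i) hi.
have ip : (i < p)%N.
  have := ltn_ord i; rewrite ltnS leq_eqVlt => /orP [/eqP ei|//].
  by move: ne; rewrite -(inj_eq val_inj) /= ei eqxx.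
have -> : 'C(p, i)%:Z * a ^+ (p - i) * b ^+ i * 2 ^+ i./2 =
   'C(p, i)%:Z * (a ^+ (p - i) * b ^+ i * 2 ^+ i./2) by ring.
by apply: dvdz_mulr; apply: dvd_bin; rewrite i0 ip.
Qed.

Lemma DB2 a b : (b ^+ 3 %| Bof p a b - P * a ^+ (p - 1) * b)%Z.
Proof.
have h1 : (1 < p.+1)%N by rewrite ltnS prime_gt0.
rewrite /Bof (bigD1 (Ordinal h1)) //= bin1 expr1 expr0 mulr1.
rewrite addrC addrK.
apply: rpred_sum => i /andP [hi ne].
have i3 : (3 <= i)%N.
  have ne1 : nat_of_ord i != 1%N by move: ne; rewrite -(inj_eq val_inj).
  move: ne1 hi; case: (nat_of_ord i) => [|[|[|j]]] //.
have -> : 'C(p, i)%:Z * a ^+ (p - i) * b ^+ i * 2 ^+ i./2 =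
   b ^+ i * ('C(p, i)%:Z * a ^+ (p - i) * 2 ^+ i./2) by ring.
by apply: dvdz_mulr; apply: dvd_pow.
Qed.

Lemma DA2 a b :
  (a ^+ 3 %| Aof p a b - P * a * b ^+ (p - 1) * 2 ^+ (p - 1)./2)%Z.
Proof.
have h1 : (p - 1 < p.+1)%N by lia.
have ev : ~~ odd (p - 1) by rewrite oddB ?prime_gt0 // op.
rewrite /Aof (bigD1 (Ordinal h1)) //= bin_sub ?prime_gt0 // bin1.
have -> : (p - (p - 1) = 1)%N by have := prime_gt0 pr; lia.
rewrite expr1 addrC addrK.
apply: rpred_sum => i /andP [hi ne].
have ne1 : nat_of_ord i != (p - 1)%N by move: ne; rewrite -(inj_eq val_inj).
have nep : nat_of_ord i != p by apply/eqP => ei; rewrite ei op in hi.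
have nep2 : (nat_of_ord i + 2 != p)%N.
  by apply/eqP => ei; move: op; rewrite -ei oddD (negbTE hi).
have ip := ltn_ord i.
have i3 : (3 <= p - i)%N by lia.
have -> : 'C(p, i)%:Z * a ^+ (p - i) * b ^+ i * 2 ^+ i./2 =
   a ^+ (p - i) * ('C(p, i)%:Z * b ^+ i * 2 ^+ i./2) by ring.
by apply: dvdz_mulr; apply: dvd_pow.
Qed.

Lemma Bin (c : int) n : (0 < n)%N -> (P ^+ n %| c)%Z ->
  (P ^+ n.+2 %| (1 + c) ^+ p - 1 - P * c)%Z.
Proof.
move=> n0 hc.
have h1 : (1 < p.+1)%N by rewrite ltnS prime_gt0.
rewrite [1 + c]addrC exprD1n (bigD1 ord0) //= (bigD1 (Ordinal h1)) //= bin0 bin1 expr0 expr1.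
have -> : c *+ p = P * c by rewrite -mulr_natl natz.
have -> : forall (u v w : int), u + (w + v) - u - w = v.
  by move=> u v w; ring.
apply: rpred_sum => i /andP [ne1 ne0].
have i0 : (0 < i)%N by rewrite lt0n.
have i2 : (2 <= i)%N.
  have ne1' : nat_of_ord i != 1%N by move: ne1; rewrite -(inj_eq val_inj).
  move: i0 ne1'; case: (nat_of_ord i) => [|[|j]] //.
have ip := ltn_ord i; rewrite ltnS leq_eqVlt in ip.
case/orP: ip => [/eqP ->|ip].
  rewrite binn mulr1n; have hh := @dvd_pow_mul p c n p n.+2 hc; apply: hh.
  have := p_ge3; nia.
rewrite -mulr_natl natz.
have -> : 'C(p, i)%:Z * c ^+ i = ('C(p, i)%:Z * c ^+ 2) * c ^+ (i - 2).
  by rewrite -mulrA -exprD subnKC.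
apply: dvdz_mulr; rewrite exprS; apply: dvdz_mul.
  by apply: dvd_bin; rewrite i0 ip.
have hh := @dvd_pow_mul p c n 2 n.+1 hc; apply: hh; lia.
Qed.

End Exp.

Section More.
Variable p : nat.
Hypothesis pr : prime p.
Hypothesis op : odd p.
Local Notation P := (p%:Z).

Lemma PoszX' (n k : nat) : ((n ^ k)%N : int) = (n : int) ^+ k.
Proof. by rewrite -natz natrX natz. Qed.

Lemma fermat_int (u : int) : (P %| u ^+ p - u)%Z.
Proof.
rewrite -eqz_mod_dvd -modzXm.
have r0 : 0 <= (u %% P)%Z by apply: modz_ge0; apply: (P_neq0 _ pr).
rewrite -(gez0_abs r0) -PoszX' !modz_nat fermat_little //.
by rewrite -modz_nat (gez0_abs r0) modz_mod.
Qed.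

Lemma Lval (u w e : int) : (P %| w)%Z -> ~~ (P %| e)%Z ->
  (w ^+ 3 %| u - P * e * w)%Z ->
  forall n, (P ^+ n.+1 %| u)%Z = (P ^+ n %| w)%Z.
Proof.
move=> pw pe h; elim=> [|n IH].
  rewrite expr1 expr0 dvd1z -(subrK (P * e * w) u) rpredDl.
    by rewrite -mulrA dvdz_mulr.
  by apply: dvdz_trans h; rewrite (pdvdX _ pr).
case hn: (P ^+ n %| w)%Z.
  have hw : (P ^+ (maxn n 1) %| w)%Z.
    by case: (n) hn => [|m] //= hm; rewrite (maxn_idPl _).
  have d : (P ^+ n.+2 %| u - P * e * w)%Z.
    apply: dvdz_trans h; apply: (@dvd_pow_mul p w (maxn n 1) 3 n.+2 hw).
    case: (n) => [|m]; first by [].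
    have -> : maxn m.+1 1 = m.+1 by apply/maxn_idPl.
    clear -m; lia.
  rewrite -(subrK (P * e * w) u) rpredDl //.
  exact: (cancelP _ pr).
apply/idP/idP => hh.
  have : (P ^+ n.+1 %| u)%Z by apply: dvdz_trans hh; apply: dvdz_exp2l.
  by rewrite IH hn.
have : (P ^+ n %| w)%Z by apply: dvdz_trans hh; apply: dvdz_exp2l.
by rewrite hn.
Qed.

End More.

Lemma exp_s (R : comNzRingType) (s : R) (hs : s * s = 2) i :
  s ^+ i = 2 ^+ i./2 * s ^+ odd i.
Proof.
rewrite -{1}(odd_double_half i) exprD -mul2n exprM expr2 hs mulrC.
by [].
Qed.

Lemma expand (R : comNzRingType) (s : R) (hs : s * s = 2) p (a b : int) :
  (a%:~R + b%:~R * s) ^+ p = (Aof p a b)%:~R + (Bof p a b)%:~R * s.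
Proof.
rewrite exprDn (bigID (fun i : 'I_p.+1 => odd i)) /= addrC.
rewrite /Aof /Bof !rmorph_sum /= big_distrl /=.
congr (_ + _); apply: eq_bigr => i hi.
  rewrite exprMn (exp_s _ _ hs) (negbTE hi) /=; rewrite -mulr_natr !intrM !rmorphXn /= ?expr0 ?mulr1 ?expr1; ring.
rewrite exprMn (exp_s _ _ hs) hi /= -mulr_natr !intrM !rmorphXn /= ?expr1; ring.
Qed.

Lemma irr2 (m n : int) : m ^+ 2 = 2 * n ^+ 2 -> n = 0.
Proof.
move=> h; apply/eqP/negPn/negP => n0.
have m0 : m != 0.
  apply/negP => /eqP m0; move: h; rewrite m0 expr0n /= => /esym/eqP.
  by rewrite mulf_eq0 expf_eq0 /= (negbTE n0).
have : absz (m ^+ 2) = absz (2 * n ^+ 2) by rewrite h.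
rewrite abszM !abszX => /(congr1 (logn 2)).
rewrite lognM; last 2 first. by []. by rewrite expn_gt0 absz_gt0 n0. rewrite !lognX. have -> : logn 2 (absz 2) = 1%N by [].
lia.
Qed.

Lemma decomp (R : rcfType) p (x a b : int) :
  x%:~R + Num.sqrt (2 : R) =
    (1 + Num.sqrt 2) * (a%:~R + b%:~R * Num.sqrt 2) ^+ p ->
  x = Aof p a b + 2 * Bof p a b /\ Aof p a b + Bof p a b = 1.
Proof.
set s := Num.sqrt (2 : R).
have hs : s * s = 2 by rewrite -expr2 sqr_sqrtr ?ler0n.
rewrite (expand _ _ hs) => h.
set A := Aof p a b in h *; set B := Bof p a b in h *.
have e : (x - A - 2 * B)%:~R = (A + B - 1)%:~R * s.
  have hx : x%:~R = (1 + s) * (A%:~R + B%:~R * s) - s by rewrite -h addrK.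
  apply/eqP; rewrite -subr_eq0; apply/eqP.
  have -> : (x - A - 2 * B)%:~R - (A + B - 1)%:~R * s = B%:~R * (s * s - 2) :> R.
    rewrite !rmorphB /= !rmorphD /= rmorphM /= hx; ring.
  by rewrite hs subrr mulr0.
have h2 : (x - A - 2 * B) ^+ 2 = 2 * (A + B - 1) ^+ 2.
  apply: (@intr_inj R); rewrite rmorphM /= e rmorphM /= rmorphXn /=.
  transitivity ((A + B - 1)%:~R ^+ 2 * (s * s) : R); first ring.
  by rewrite hs; ring.
have := irr2 _ _ h2 => /eqP; rewrite subr_eq0 => /eqP hAB.
move: h2; rewrite hAB subrr expr0n mulr0 /= => /eqP.
rewrite sqrf_eq0 subr_eq0 subr_eq => /eqP ->; split => //; ring.
Qed.

Arguments decomp {R p x a b}.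
Arguments DA1 {p}. Arguments DB1 {p}. Arguments DB2 {p}. Arguments DA2 {p}.
Arguments fermat_int {p}. Arguments p_ge3 {p}. Arguments pdvdM {p}. Arguments pdvdX {p}.
Arguments dvd_pow_mul {p c n k m}. Arguments vp_eqP {p}. Arguments vp_SP {p}.
Arguments Lval {p} pr {u w e}. Arguments Bin {p}.

Lemma ar1 n : (n.+2 <= n.+1 * 2)%N. Proof. lia. Qed.
Lemma ar2 n : (n.+3 <= n.+1 * 3)%N. Proof. lia. Qed.

Lemma dvd_comb {d u v w : int} : w = u + v -> (d %| u)%Z -> (d %| v)%Z -> (d %| w)%Z.
Proof. by move=> -> hu hv; rewrite rpredD. Qed.

Lemma pdvdX' {p} {u : int} {k} : prime p -> (p%:Z %| u ^+ k)%Z -> (p%:Z %| u)%Z.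
Proof.
move=> pr; case: k => [|k]; last by rewrite pdvdX.
rewrite expr0 dvdz1 absz_nat => /eqP p1.
by move: pr; rewrite p1.
Qed.

Theorem theorem7p6 (R : rcfType) (p : nat) (x y a b : int) :
  prime p -> odd p ->
  x ^+ 2 - 2 = y ^+ p -> y != -1 ->
  x%:~R + Num.sqrt (2 : R) =
    (1 + Num.sqrt 2) * (a%:~R + b%:~R * Num.sqrt 2) ^+ p ->
  [/\ vp p (a - 1) = vp p b,
      ((p%:Z %| b)%Z -> vp p (x - 1) = omap S (vp p b)) /\
      (~~ (p%:Z %| b)%Z -> ~~ (p%:Z %| x - 1)%Z) /\
      (~~ (p%:Z %| x - 1)%Z \/ ((p ^ 2)%:Z %| x - 1)%Z)
    & ((p%:Z %| a)%Z -> vp p (x - 2) = omap S (vp p a)) /\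
      (~~ (p%:Z %| a)%Z -> ~~ (p%:Z %| x - 2)%Z) /\
      (~~ (p%:Z %| x - 2)%Z \/ ((p ^ 2)%:Z %| x - 2)%Z)].
Proof.
move=> pr op _ _ hR.
have [hx hAB] := decomp hR.
have dA1 := DA1 pr op a b.
have dB1 := DB1 pr op a b.
have dB2 := DB2 pr a b.
have dA2 := DA2 pr op a b.
have Fa := fermat_int pr a.
move: hx hAB dA1 dB1 dB2 dA2.
set A := Aof p a b; set B := Bof p a b => hx hAB dA1 dB1 dB2 dA2.
have eB : B = 1 - A by rewrite -hAB addrC addKr.
have hB : x - 1 = B by rewrite hx eB; ring.
have hA : x - 2 = - A by rewrite hx eB; ring.
have p3 := p_ge3 pr op.
have nP1 : ~~ (p%:Z %| 1)%Z by rewrite dvdz1 absz_nat; apply/eqP => e; rewrite e in p3.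
have nP2 : ~~ (p%:Z %| 2)%Z.
  rewrite dvdzE absz_nat; apply/negP => /dvdn_leq => /(_ isT) => h2.
  by move: (leq_trans p3 h2).
have A1 : (p%:Z %| A - a ^+ p)%Z.
  by apply: dvdz_trans dA1; apply: dvdz_mulr; apply: dvdzz.
have base : (p%:Z %| a - 1)%Z = (p%:Z %| b)%Z.
  apply/idP/idP => h.
    have h1 : (p%:Z %| a ^+ p - 1)%Z.
      by apply: (dvd_comb _ h Fa); ring.
    have h2 : (p%:Z %| B)%Z.
      by rewrite eB; apply: (dvd_comb (u := - (A - a ^+ p)) (v := - (a ^+ p - 1))); rewrite ?rpredN //; ring.
    have h3 : (p%:Z %| 2 ^+ p./2 * b ^+ p)%Z.
      by apply: (dvd_comb (u := B) (v := - (B - 2 ^+ p./2 * b ^+ p))); rewrite ?rpredN //; ring.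
    move: h3; rewrite pdvdM // => /orP [/(pdvdX' pr) h4|/(pdvdX' pr) //].
    by rewrite h4 in nP2.
  have h1 : (p%:Z %| 2 ^+ p./2 * b ^+ p)%Z.
    by apply: dvdz_mull; apply: dvdz_exp (prime_gt0 pr) h.
  have h2 : (p%:Z %| B)%Z by apply: (dvd_comb _ dB1 h1); ring.
  have h3 : (p%:Z %| a ^+ p - 1)%Z.
    apply: (dvd_comb (u := - (A - a ^+ p)) (v := - B)); rewrite ?rpredN //.
    by rewrite eB; ring.
  apply: (dvd_comb (u := a ^+ p - 1) (v := - (a ^+ p - a))); rewrite ?rpredN //; ring.
have nPab : ~~ ((p%:Z %| a)%Z && (p%:Z %| b)%Z).
  apply/negP => /andP [ha hb]; rewrite -base in hb.
  have : (p%:Z %| 1)%Z by apply: (dvd_comb (u := a) (v := - (a - 1))); rewrite ?rpredN //; ring.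
  by rewrite (negbTE nP1).
have claim : forall n, (p%:Z ^+ n %| a - 1)%Z = (p%:Z ^+ n %| b)%Z.
  elim=> [|n IH]; first by rewrite !expr0 !dvd1z.
  case: n IH => [|n] IH; first by rewrite !expr1.
  case hc: (p%:Z ^+ n.+1 %| a - 1)%Z; last first.
    apply/idP/idP => hh.
      have : (p%:Z ^+ n.+1 %| a - 1)%Z by apply: dvdz_trans hh; apply: dvdz_exp2l.
      by rewrite hc.
    have : (p%:Z ^+ n.+1 %| b)%Z by apply: dvdz_trans hh; apply: dvdz_exp2l.
    by rewrite -IH hc.
  have hb : (p%:Z ^+ n.+1 %| b)%Z by rewrite -IH.
  have T1 : (p%:Z ^+ n.+3 %| a ^+ p - 1 - p%:Z * (a - 1))%Z.
    have := Bin pr op (a - 1) n.+1 (ltn0Sn _) hc.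
    by rewrite [1 + _]addrC subrK.
  have T2 : (p%:Z ^+ n.+3 %| A - a ^+ p)%Z.
    apply: dvdz_trans dA1; rewrite exprS; apply: dvdz_mul; first exact: dvdzz.
    have hh := dvd_pow_mul (k := 2) (m := n.+2) hb; apply: hh; exact: ar1.
  have T4 : (p%:Z ^+ n.+3 %| B - p%:Z * a ^+ (p - 1) * b)%Z.
    apply: dvdz_trans dB2.
    have hh := dvd_pow_mul (k := 3) (m := n.+3) hb; apply: hh; exact: ar2.
  have T3 : (p%:Z ^+ n.+3 %| p%:Z * b * (a ^+ (p - 1) - 1))%Z.
    have hd : (a - 1 %| a ^+ (p - 1) - 1)%Z by rewrite subrX1 dvdz_mulr.
    have e3 : p%:Z ^+ n.+3 = p%:Z * p%:Z ^+ n.+1 * p%:Z ^+ 1.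
      by rewrite -exprS -exprD addn1.
    rewrite e3; apply: dvdz_mul; first by apply: dvdz_mul => //; apply: dvdzz.
    apply: dvdz_trans hd; apply: dvdz_trans hc; apply: dvdz_exp2l.
    done.
  have key : (p%:Z ^+ n.+2 %| (a - 1) + b)%Z.
    rewrite -(dvdz_mul2l (P_neq0 _ pr)) -exprS.
    apply: (dvd_comb (u := - ((a ^+ p - 1 - p%:Z * (a - 1)) + (A - a ^+ p)))
                     (v := - (p%:Z * b * (a ^+ (p - 1) - 1) + (B - p%:Z * a ^+ (p - 1) * b)))).
      by rewrite eB; ring.
      by rewrite rpredN rpredD.
    by rewrite rpredN rpredD.
  have -> : a - 1 = ((a - 1) + b) - b by ring.
  by rewrite rpredBl.
split.
- exact: (vp_eqP pr).
- have nb : ~~ (p%:Z %| b)%Z -> ~~ (p%:Z %| x - 1)%Z.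
    move=> nb; rewrite hB; apply/negP => hB'.
    have : (p%:Z %| 2 ^+ p./2 * b ^+ p)%Z.
      by apply: (dvd_comb (u := B) (v := - (B - 2 ^+ p./2 * b ^+ p))); rewrite ?rpredN //; ring.
    rewrite pdvdM // => /orP [/(pdvdX' pr) h4|/(pdvdX' pr) h4].
      by rewrite h4 in nP2.
    by rewrite h4 in nb.
  have Lb : (p%:Z %| b)%Z -> forall n, (p%:Z ^+ n.+1 %| B)%Z = (p%:Z ^+ n %| b)%Z.
    move=> hb; apply: (Lval pr hb _ dB2).
    apply/negP => /(pdvdX' pr) ha.
    by move: nPab; rewrite ha hb.
  split; first by move=> hb; rewrite hB; apply: (vp_SP pr); apply: Lb.
  split; first exact: nb.
  case: (boolP (p%:Z %| x - 1)%Z) => h; last by left.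
  right; have hb : (p%:Z %| b)%Z by apply/negPn/negP => /nb; rewrite h.
  by rewrite PoszX' hB; have := Lb hb 1; rewrite expr1 hb.
- have na : ~~ (p%:Z %| a)%Z -> ~~ (p%:Z %| x - 2)%Z.
    move=> na; rewrite hA rpredN; apply/negP => hA'.
    have : (p%:Z %| a ^+ p)%Z.
      by apply: (dvd_comb (u := A) (v := - (A - a ^+ p))); rewrite ?rpredN //; ring.
    by move/(pdvdX' pr); apply/negP.
  have La : (p%:Z %| a)%Z -> forall n, (p%:Z ^+ n.+1 %| x - 2)%Z = (p%:Z ^+ n %| a)%Z.
    move=> ha; apply: (Lval pr ha (e := - (b ^+ (p - 1) * 2 ^+ (p - 1)./2))).
      rewrite rpredN pdvdM //; apply/negP => /orP [/(pdvdX' pr) hb|/(pdvdX' pr) h2].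
        by move: nPab; rewrite ha hb.
      by rewrite h2 in nP2.
    have -> : x - 2 - p%:Z * - (b ^+ (p - 1) * 2 ^+ (p - 1)./2) * a =
      - (A - p%:Z * a * b ^+ (p - 1) * 2 ^+ (p - 1)./2) by rewrite hA; ring.
    by rewrite rpredN.
  split; first by move=> ha; apply: (vp_SP pr); apply: La.
  split; first exact: na.
  case: (boolP (p%:Z %| x - 2)%Z) => h; last by left.
  right; have ha : (p%:Z %| a)%Z by apply/negPn/negP => /na; rewrite h.
  by rewrite PoszX'; have := La ha 1; rewrite expr1 ha.
Qed.
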